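(* Let $\mathcal{X}$ be a symmetric configuration $v_3$ having a blocking set $Q$ of cardinality $q$, where $\lceil v/3\rceil\leq q<\lfloor v/2\rfloor$. Then $\mathcal{X}$ also has a blocking set of cardinality $q+1$.
   Context: A symmetric configuration $v_3$ consists of a set of $v$ points and a collection of $v$ blocks, each block being a 3-element subset of the points, such that every point lies in exactly 3 blocks and any two distinct points lie in at most one common block. A blocking set of such a configuration is a subset $Q$ of the points such that every block contains at least one point of $Q$ and at least one point not in $Q$. *)

(* Defs.v *)
From mathcomp Require Import all_boot.
Set Implicit Arguments. Unset Strict Implicit. Unset Printing Implicit Defensive.

Definition sym_config_v3 (T : finType) (blocks : {set {set T}}) : Prop :=
  [/\ #|blocks| = #|T|,
      (forall b, b \in blocks -> #|b| = 3),
      (forall x : T, #|[set b in blocks | x \in b]| = 3) &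
      (forall x y : T, x != y -> #|[set b in blocks | (x \in b) && (y \in b)]| <= 1)].

Definition blocking_set (T : finType) (blocks : {set {set T}}) (Q : {set T}) : Prop :=
  forall b, b \in blocks -> (b :&: Q != set0) /\ (b :\: Q != set0).

(* Main.v *)
Require Import Defs.
From mathcomp Require Import all_boot.
From mathcomp Require Import zify.

Theorem mainTheorem1 (T : finType) (blocks : {set {set T}}) (Q : {set T}) :
  sym_config_v3 blocks -> blocking_set blocks Q ->
  (#|T| %/ 3 + (#|T| %% 3 != 0) <= #|Q|)%N -> (#|Q| < #|T| %/ 2)%N ->
  exists Q' : {set T}, blocking_set blocks Q' /\ #|Q'| = #|Q|.+1.
Proof.
move=> [Hnb H3 Hdeg _] Hbl _ Hq.
have Hlo : forall b, b \in blocks -> (1 <= #|b :&: Q| <= 2)%N.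
  move=> b Hb; have [H1 H2] := Hbl b Hb.
  rewrite -card_gt0 in H1; rewrite -card_gt0 in H2.
  have := cardsID Q b; rewrite (H3 b Hb); lia.
have E1 : forall b, #|b :&: Q| = \sum_(x in Q) (x \in b : nat).
  move=> b; rewrite -sum1_card big_mkcond [RHS]big_mkcond /=.
  apply: eq_bigr => x _; rewrite in_setI; by case: (x \in b); case: (x \in Q).
have E2 : forall x, #|[set b in blocks | x \in b]| = \sum_(b in blocks) (x \in b : nat).
  move=> x; rewrite -sum1_card big_mkcond [RHS]big_mkcond /=.
  apply: eq_bigr => b _; rewrite in_set; by case: (x \in b); case: (b \in blocks).
have Esum : \sum_(b in blocks) #|b :&: Q| = 3 * #|Q|.
  under eq_bigr => b _ do rewrite E1.
  rewrite exchange_big /=.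
  under eq_bigr => x _ do rewrite -E2 Hdeg.
  by rewrite sum_nat_const mulnC.
set B2 := [set b in blocks | #|b :&: Q| == 2].
have HB2 : (#|B2| + #|T| <= 3 * #|Q|)%N.
  rewrite -Esum -Hnb.
  have -> : #|B2| = \sum_(b in blocks | b \in B2) 1.
    rewrite -sum1_card; apply: eq_bigl => b; rewrite /B2 in_set; by case: (b \in blocks).
  rewrite -[#|blocks|]sum1_card.
  rewrite [X in (_ <= X)%N](bigID (fun b => b \in B2)) /=.
  rewrite [X in (_ + X <= _)%N](bigID (fun b => b \in B2)) /=.
  rewrite addnA -big_split /=. apply: leq_add.
    apply: leq_sum => b /andP[_]; rewrite /B2 in_set => /andP[Hb /eqP ->]; by [].
  apply: leq_sum => b /andP[Hb Hn].
  by have := Hlo b Hb; lia.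
set f := fun b : {set T} => [pick y in b :\: Q].
set bad := [set x | [exists b in B2, x \in b :\: Q]].
have Hbad : (#|bad| <= #|B2|)%N.
  have -> : #|bad| = #|Some @: bad|.
    by rewrite card_imset //; move=> a c [].
  apply: leq_trans (leq_imset_card f B2).
  apply: subset_leq_card; apply/subsetP => _ /imsetP[x Hx ->].
  move: Hx; rewrite in_set => /existsP[b /andP[Hb Hxb]].
  apply/imsetP; exists b => //.
  move: Hb; rewrite /B2 in_set => /andP[Hb /eqP H2].
  have H1 : #|b :\: Q| = 1 by have := cardsID Q b; rewrite (H3 b Hb) H2; lia.
  move/eqP/cards1P: H1 => [y Hy].
  rewrite /f; case: pickP => [z Hz|Hn].
    by move: Hz Hxb; rewrite Hy !in_set1 => /eqP -> /eqP ->.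
  by move: (Hn x); rewrite Hxb.
have : (0 < #|~: Q :\: bad|)%N.
  have := cardsID bad (~: Q).
  have := subset_leq_card (subsetIr (~: Q) bad).
  have := cardsC Q.
  have := leq_divM #|T| 2. have := divn_eq #|T| 2.
  have := ltn_pmod #|T| (isT : 0 < 2)%N.
  lia.
rewrite card_gt0 => /set0Pn[x]; rewrite !in_set => /andP[Hxb HxQ].
exists (x |: Q); split; last by rewrite cardsU1 HxQ.
move=> b Hb; have [H1 H2] := Hbl b Hb; split.
  move/set0Pn: H1 => [y]; rewrite in_setI => /andP[Hyb HyQ].
  apply/set0Pn; exists y; by rewrite in_setI Hyb in_setU1 HyQ orbT.
case Hxbb: (x \in b).
  have Hn2 : #|b :&: Q| != 2.
    apply/negP => Hc; move: Hxb; rewrite negb_exists => /forallP /(_ b).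
    by rewrite /B2 in_set Hb Hc in_setD Hxbb HxQ.
  have := Hlo b Hb; have := cardsID Q b; rewrite (H3 b Hb) (cardsD1 x (b :\: Q)).
  rewrite in_setD Hxbb HxQ /= => Hc Hl.
  have : (0 < #|b :\: Q :\ x|)%N by move: Hn2; lia.
  rewrite card_gt0 => /set0Pn[y]; rewrite !in_setD in_set1 => /and3P[Hyx HyQ Hyb].
  apply/set0Pn; exists y; by rewrite in_setD in_setU1 negb_or Hyx HyQ Hyb.
move/set0Pn: H2 => [y]; rewrite in_setD => /andP[HyQ Hyb].
apply/set0Pn; exists y; rewrite in_setD in_setU1 negb_or HyQ Hyb !andbT.
by apply/eqP => Hyx; rewrite -Hyx Hyb in Hxbb.
Qed.
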